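(* Let $x,y,z,t$ be integers and put $n_1=2(xz+yt)$, $n_2=2(zt-xy)$, $n_3=x^2-y^2-z^2+t^2$. If $\gcd(n_1,n_2,n_3)=n>1$, then the quaternion $q=x+yi+zj+tk$ factors as $q=(x'+y'i+z'j+t'k)\,\eta$ with $x',y',z',t'\in\mathbb{Z}$ and $\eta\in\{1+i,\ 1+j,\ \alpha+\beta k\}$ for some integers $\alpha,\beta$ with $\alpha^2+\beta^2>1$.
   Context: Quaternions: $\mathbb{H}(\mathbb{R})$ is the real associative algebra with basis $1,i,j,k$ and $i^2=j^2=k^2=-1$, $ij=-ji=k$, $jk=-kj=i$, $ki=-ik=j$. Products are taken in this (noncommutative) algebra. *)

(* Defs.v *)
From mathcomp Require Import all_boot all_order all_algebra.
Set Implicit Arguments. Unset Strict Implicit. Unset Printing Implicit Defensive.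
Import Order.TTheory GRing.Theory Num.Theory.
Local Open Scope ring_scope.

(* Integral quaternions a + b i + c j + d k (a,b,c,d : int), i.e. the
   elements of H(R) with integer coordinates, with the Hamilton product
   (i^2 = j^2 = k^2 = -1, ij = -ji = k, jk = -kj = i, ki = -ik = j). *)
Record zquat := ZQuat { qre : int; qi : int; qj : int; qk : int }.

Definition qmul (a b : zquat) : zquat :=
  ZQuat (qre a * qre b - qi a * qi b - qj a * qj b - qk a * qk b)
        (qre a * qi b + qi a * qre b + qj a * qk b - qk a * qj b)
        (qre a * qj b - qi a * qk b + qj a * qre b + qk a * qi b)
        (qre a * qk b + qi a * qj b - qj a * qi b + qk a * qre b).

(* Main.v *)
Require Import Defs.
From HB Require Import structures.
From mathcomp Require Import all_boot all_order all_algebra.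
From mathcomp Require Import ring lra zify.
Import Order.TTheory GRing.Theory Num.Theory.
Local Open Scope ring_scope.
Record gi := GI { gre : int; gim : int }.
Definition gi2p (a : gi) := (gre a, gim a).
Definition p2gi (p : int * int) := GI p.1 p.2.
Lemma gi2pK : cancel gi2p p2gi. Proof. by case. Qed.
HB.instance Definition _ := Equality.copy gi (can_type gi2pK).
HB.instance Definition _ := Choice.copy gi (can_type gi2pK).

Definition gadd a b := GI (gre a + gre b) (gim a + gim b).
Definition gopp a := GI (- gre a) (- gim a).
Definition gzero := GI 0 0.
Lemma gaddA : associative gadd. Proof. by move=> [? ?] [? ?] [? ?]; rewrite /gadd /= !addrA. Qed.
Lemma gaddC : commutative gadd. Proof. by move=> [? ?] [? ?]; rewrite /gadd /=; congr GI; apply: addrC. Qed.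
Lemma gadd0 : left_id gzero gadd. Proof. by move=> [? ?]; rewrite /gadd /= !add0r. Qed.
Lemma gaddN : left_inverse gzero gopp gadd. Proof. by move=> [? ?]; rewrite /gadd /= !addNr. Qed.
HB.instance Definition _ := GRing.isZmodule.Build gi gaddA gaddC gadd0 gaddN.

Definition gmul a b := GI (gre a * gre b - gim a * gim b) (gre a * gim b + gim a * gre b).
Definition gone := GI 1 0.
Lemma gmulA : associative gmul. Proof. move=> [? ?] [? ?] [? ?]; rewrite /gmul /=; congr GI; ring. Qed.
Lemma gmulC : commutative gmul. Proof. move=> [? ?] [? ?]; rewrite /gmul /=; congr GI; ring. Qed.
Lemma gmul1 : left_id gone gmul. Proof. move=> [? ?]; rewrite /gmul /=; congr GI; ring. Qed.
Lemma gmulD : left_distributive gmul gadd. Proof. move=> [? ?] [? ?] [? ?]; rewrite /gmul /gadd /=; congr GI; ring. Qed.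
Lemma gnz : gone != 0. Proof. by []. Qed.
HB.instance Definition _ := GRing.Zmodule_isComNzRing.Build gi gmulA gmulC gmul1 gmulD gnz.


Lemma gi_ext (a b : gi) : gre a = gre b -> gim a = gim b -> a = b.
Proof. by case: a; case: b => ? ? ? ? /= -> ->. Qed.
Lemma reM (a b : gi) : gre (a * b) = gre a * gre b - gim a * gim b. Proof. by []. Qed.
Lemma imM (a b : gi) : gim (a * b) = gre a * gim b + gim a * gre b. Proof. by []. Qed.
Lemma reD (a b : gi) : gre (a + b) = gre a + gre b. Proof. by []. Qed.
Lemma imD (a b : gi) : gim (a + b) = gim a + gim b. Proof. by []. Qed.
Lemma reN (a : gi) : gre (- a) = - gre a. Proof. by []. Qed.
Lemma imN (a : gi) : gim (- a) = - gim a. Proof. by []. Qed.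
Lemma re1 : gre 1 = 1. Proof. by []. Qed.
Lemma im1 : gim 1 = 0. Proof. by []. Qed.
Lemma re0 : gre 0 = 0. Proof. by []. Qed.
Lemma im0 : gim 0 = 0. Proof. by []. Qed.
Definition gE := (reM, imM, reD, imD, reN, imN, re1, im1, re0, im0).

Definition gc (a : gi) := GI (gre a) (- gim a).
Definition ic (n : int) := GI n 0.
Definition gnorm (a : gi) := gre a ^+ 2 + gim a ^+ 2.

Lemma gcM a b : gc (a * b) = gc a * gc b.
Proof. apply: gi_ext; rewrite /gc !gE /=; ring. Qed.
Lemma gcD a b : gc (a + b) = gc a + gc b.
Proof. apply: gi_ext; rewrite /gc !gE /=; ring. Qed.
Lemma gc1 : gc 1 = 1.
Proof. apply: gi_ext; rewrite /gc !gE /=; ring. Qed.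
Lemma gcic n : gc (ic n) = ic n.
Proof. apply: gi_ext; rewrite /gc /ic /=; ring. Qed.
Lemma gnormE a : a * gc a = ic (gnorm a).
Proof. apply: gi_ext; rewrite /gc /ic /gnorm !gE /=; ring. Qed.
Lemma gnM a b : gnorm (a * b) = gnorm a * gnorm b.
Proof. rewrite /gnorm !gE; ring. Qed.
Lemma gnc a : gnorm (gc a) = gnorm a.
Proof. rewrite /gnorm /gc /=; ring. Qed.
Lemma gn_ge0 a : 0 <= gnorm a.
Proof. by rewrite /gnorm addr_ge0 // sqr_ge0. Qed.
Lemma gn0 a : gnorm a <= 0 -> a = 0.
Proof.
rewrite /gnorm => h.
have h1 := sqr_ge0 (gre a); have h2 := sqr_ge0 (gim a).
have e1 : gre a ^+ 2 = 0 by lra.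
have e2 : gim a ^+ 2 = 0 by lra.
move/eqP: e1; rewrite sqrf_eq0 => /eqP e1.
move/eqP: e2; rewrite sqrf_eq0 => /eqP e2.
by apply: gi_ext; rewrite ?e1 ?e2.
Qed.
Lemma reic n w : gre (ic n * w) = n * gre w.
Proof. rewrite !gE /ic /=; ring. Qed.

Lemma gdiv (a b : gi) : b != 0 -> exists q, gnorm (a - b * q) < gnorm b.
Proof.
move=> b0; set n := gnorm b.
have n0 : 0 < n.
  rewrite lt_neqAle gn_ge0 andbT; apply/eqP => h; move: b0.
  by rewrite (@gn0 b) ?eqxx // -/n -h.
set c := a * gc b; set P := gre c; set Q := gim c.
pose q1 := ((2 * P + n) %/ (2 * n))%Z; pose q2 := ((2 * Q + n) %/ (2 * n))%Z.
exists (GI q1 q2).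
have hb : b * gc b = ic n by rewrite gnormE.
have hr : (a - b * GI q1 q2) * gc b = c - ic n * GI q1 q2.
  by rewrite /c -hb; ring.
have hn : gnorm (a - b * GI q1 q2) * n = (P - n * q1) ^+ 2 + (Q - n * q2) ^+ 2.
  rewrite /n -(gnc b) -gnM hr /gnorm /ic /P /Q /c /n /gnorm !gE /=.
ring.
have m0 : 2 * n != 0 by lia.
have d1 := divz_eq (2 * P + n) (2 * n).
have d2 := divz_eq (2 * Q + n) (2 * n).
have r1 := modz_ge0 (2 * P + n) m0.
have r2 := modz_ge0 (2 * Q + n) m0.
have s1 := ltz_pmod (2 * P + n) (_ : 0 < 2 * n).
have s2 := ltz_pmod (2 * Q + n) (_ : 0 < 2 * n).
rewrite -/q1 in d1; rewrite -/q2 in d2.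
have {s1} s1 := s1 (ltac:(lia)); have {s2} s2 := s2 (ltac:(lia)).
set D1 := P - n * q1 in hn; set D2 := Q - n * q2 in hn.
have b1 : 0 <= 2 * D1 + n by lia.
have b1' : 2 * D1 + n < 2 * n by lia.
have b2 : 0 <= 2 * D2 + n by lia.
have b2' : 2 * D2 + n < 2 * n by lia.
have c1 : 4 * D1 ^+ 2 <= n ^+ 2 by nia.
have c2 : 4 * D2 ^+ 2 <= n ^+ 2 by nia.
have := gn_ge0 (a - b * GI q1 q2).
nia.
Qed.

Lemma gbez (a b : gi) : exists d s r, d = a * s + b * r /\
  (exists w, a = d * w) /\ (exists w, b = d * w).
Proof.
have [N hN] : exists N : nat, gnorm b <= N%:Z.
  by exists (absz (gnorm b)); rewrite gez0_abs // gn_ge0.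
elim: N a b hN => [|N IH] a b hN.
  have -> : b = 0 by apply: gn0.
  exists a, 1, 0; split; first by ring.
  by split; [exists 1 | exists 0]; ring.
have [->|b0] := eqVneq b 0.
  exists a, 1, 0; split; first by ring.
  by split; [exists 1 | exists 0]; ring.
have [q hq] := gdiv a b b0.
have [|d [s [r [hd [[w1 hw1] [w2 hw2]]]]]] := IH b (a - b * q).
  lia.
exists d, r, (s - q * r); split.
  by rewrite hd; ring.
split; last by exists w1.
exists (w2 + w1 * q).
have -> : a = (a - b * q) + b * q by ring.
rewrite {1}hw2 {1}hw1; ring.
Qed.

Lemma gcK a : gc (gc a) = a.
Proof. apply: gi_ext; rewrite /gc /=; ring. Qed.

Lemma key (g : int) (u v s r A B : gi) : 1 < g ->
  u * gc v = ic g * A -> u * gc u - v * gc v = ic g * B ->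
  u * s + v * r = 1 -> False.
Proof.
move=> g1 hA hB h1.
have hA' : gc u * v = ic g * gc A.
  by rewrite -[v]gcK -gcM hA gcM gcic.
have h1' : gc u * gc s + gc v * gc r = 1.
  by rewrite -!gcM -gcD h1 gc1.
move: hA hB hA' h1 h1'; set G := ic g.
move: (gc u) (gc v) (gc s) (gc r) (gc A) => ub vb sb rb A' hA hB hA' h1 h1'.
pose C := A * v * s + u * A' * r - B * v * r.
have hV : v * vb = G * C.
  have e1 : G * C = (G * A) * v * s + u * (G * A') * r - (G * B) * v * r
    by rewrite /C; ring.
  rewrite e1 -hA -hA' -hB.
  transitivity (v * vb * (u * s + v * r)); first by rewrite h1 mulr1.
  ring.
have hM : u * ub = G * (C + B).
  by rewrite mulrDr -hV -hB; ring.
have hub : ub = G * ((C + B) * s + A' * r).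
  transitivity (ub * (u * s + v * r)); first by rewrite h1 mulr1.
  have e : G * ((C + B) * s + A' * r) = (G * (C + B)) * s + (G * A') * r by ring.
  by rewrite e -hM -hA'; ring.
have hvb : vb = G * (A * s + C * r).
  transitivity (vb * (u * s + v * r)); first by rewrite h1 mulr1.
  have e : G * (A * s + C * r) = (G * A) * s + (G * C) * r by ring.
  by rewrite e -hA -hV; ring.
have : 1 = G * (((C + B) * s + A' * r) * sb + (A * s + C * r) * rb).
  by rewrite -h1' hub hvb; ring.
move/(congr1 gre); rewrite reic re1.
move: (gre _) => w h.
have [w0|w0] := lerP w 0.
  have : g * w <= 0 by rewrite pmulr_rle0 //; lia.
  lia.
have : g <= g * w by rewrite ler_pMr //; lia.
lia.
Qed.

Lemma par (m : int) : exists a e, m = 2 * a + e /\ (e = 0 \/ e = 1).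
Proof.
exists (m %/ 2)%Z, (m %% 2)%Z.
have h1 := divz_eq m 2.
have h2 := @modz_ge0 m 2 isT.
have h3 := @ltz_pmod m 2 isT.
lia.
Qed.

Lemma sqp (a e : int) : (e = 0 \/ e = 1) ->
  (2 * a + e) ^+ 2 = 2 * (2 * a ^+ 2 + 2 * a * e) + e.
Proof. by case=> ->; ring. Qed.

Theorem proposition2p9 (x y z t : int) :
  let n1 := 2 * (x * z + y * t) in
  let n2 := 2 * (z * t - x * y) in
  let n3 := x ^+ 2 - y ^+ 2 - z ^+ 2 + t ^+ 2 in
  (1 < gcdz (gcdz n1 n2) n3)%R ->
  exists (x' y' z' t' : int) (eta : zquat),
    ZQuat x y z t = qmul (ZQuat x' y' z' t') eta /\
    [\/ eta = ZQuat 1 1 0 0,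
        eta = ZQuat 1 0 1 0
      | exists alpha beta : int,
          eta = ZQuat alpha 0 0 beta /\ 1 < alpha ^+ 2 + beta ^+ 2].
Proof.
move=> n1 n2 n3 hg.
have [c [e [hc he]]] := par n3.
case: he => he; subst e.
  have [a1 [e1 [hx he1]]] := par x.
  have [a2 [e2 [hy he2]]] := par y.
  have [a3 [e3 [hz he3]]] := par z.
  have [a4 [e4 [ht he4]]] := par t.
  move: hc; rewrite /n3 hx hy hz ht (sqp _ _ he1) (sqp _ _ he2) (sqp _ _ he3) (sqp _ _ he4).
  move: (2 * a1 ^+ 2 + 2 * a1 * e1) (2 * a2 ^+ 2 + 2 * a2 * e2)
        (2 * a3 ^+ 2 + 2 * a3 * e3) (2 * a4 ^+ 2 + 2 * a4 * e4) => K1 K2 K3 K4 hc.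
  have hp : (e1 = e2 /\ e3 = e4) \/ (e1 = e3 /\ e2 = e4) \/ (e1 = e4 /\ e2 = e3).
    by case: he1 hc => -> hc; case: he2 hc => -> hc; case: he3 hc => -> hc;
      case: he4 hc => -> hc; lia.
  case: hp => [[<- <-]|[[<- <-]|[<- <-]]].
  - exists (a1 + a2 + e1), (a2 - a1), (a3 - a4), (a3 + a4 + e3), (ZQuat 1 1 0 0).
    split; last by apply: Or31.
    rewrite /qmul /=; congr ZQuat; ring.
  - exists (a1 + a3 + e1), (a2 + a4 + e2), (a3 - a1), (a4 - a2), (ZQuat 1 0 1 0).
    split; last by apply: Or32.
    rewrite /qmul /=; congr ZQuat; ring.
  - exists (a1 + a4 + e1), (a2 - a3), (a2 + a3 + e2), (a4 - a1), (ZQuat 1 0 0 1).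
    split; last by apply: Or33; exists 1, 1.
    rewrite /qmul /=; congr ZQuat; ring.
set g := gcdz (gcdz n1 n2) n3 in hg.
have d1 : (g %| n1)%Z := dvdz_trans (dvdz_gcdl _ _) (dvdz_gcdl _ _).
have d2 : (g %| n2)%Z := dvdz_trans (dvdz_gcdl _ _) (dvdz_gcdr _ _).
have d3 : (g %| n3)%Z := dvdz_gcdr _ _.
case/dvdzP: d1 => k1 hk1; case/dvdzP: d2 => k2 hk2; case/dvdzP: d3 => k3 hk3.
have hX : x * z + y * t = (x * z + y * t) * k3 * g - k1 * c * g.
  transitivity ((x * z + y * t) * n3 - n1 * c).
    by rewrite hc /n1; ring.
  by rewrite hk3 hk1; ring.
have hY : z * t - x * y = (z * t - x * y) * k3 * g - k2 * c * g.
  transitivity ((z * t - x * y) * n3 - n2 * c).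
    by rewrite hc /n2; ring.
  by rewrite hk3 hk2; ring.
pose u := GI x t; pose v := GI z y.
pose A := GI ((x * z + y * t) * k3 - k1 * c) ((z * t - x * y) * k3 - k2 * c).
have hA : u * gc v = ic g * A.
  apply: gi_ext; rewrite /gc /ic /A !gE /=.
    transitivity (x * z + y * t); first by ring.
    by rewrite {1}hX; ring.
  transitivity (z * t - x * y); first by ring.
  by rewrite {1}hY; ring.
have hB : u * gc u - v * gc v = ic g * GI k3 0.
  apply: gi_ext; rewrite /gc /ic !gE /=.
    transitivity n3; first by rewrite /n3; ring.
    by rewrite hk3; ring.
  ring.
have [d [s [r [hd [[w1 hw1] [w2 hw2]]]]]] := gbez u v.
have hx : x = gre d * gre w1 - gim d * gim w1 by have := congr1 gre hw1.
have ht : t = gre d * gim w1 + gim d * gre w1 by have := congr1 gim hw1.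
have hz : z = gre d * gre w2 - gim d * gim w2 by have := congr1 gre hw2.
have hy : y = gre d * gim w2 + gim d * gre w2 by have := congr1 gim hw2.
have [hd1|hd1] := lerP (gnorm d) 1; last first.
  exists (gre w1), (gim w2), (gre w2), (gim w1), (ZQuat (gre d) 0 0 (gim d)).
  split; last by apply: Or33; exists (gre d), (gim d).
  rewrite /qmul /= hx ht hz hy; congr ZQuat; ring.
have hge := gn_ge0 d.
have [h0|hd0] := eqVneq (gnorm d) 0.
  have d0 : d = 0 by apply: gn0; rewrite h0.
  exists 0, 0, 0, 0, (ZQuat 1 1 0 0); split; last by apply: Or31.
  rewrite hx ht hz hy d0 /qmul /=; congr ZQuat; ring.
have hn1 : gnorm d = 1.
  by move: hd0 => /eqP hd0; lia.
exfalso; apply: (@key g u v (s * gc d) (r * gc d) A (GI k3 0) hg hA hB).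
have : d * gc d = 1 by rewrite gnormE hn1.
by rewrite hd => <-; ring.
Qed.
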